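(* Let $n>k\ge 1$ and $N=2^{q}$ for an integer $q\ge 0$, and let $G_1,\dots,G_N$ be simple graphs all on the vertex set $[n]$. Let $H$ be the graph on $[n]$ in which $\{1,\dots,k\}$ is a clique, $\{k+1,\dots,n\}$ is independent, and every vertex of $\{k+1,\dots,n\}$ is adjacent to every vertex of $\{1,\dots,k\}$. Build the classification instance $E$ with features $f_1,\dots,f_{2n},d_0$ as the union of blocks $B_1,\dots,B_{2N}$: for odd $i$, $B_i$ contains one negative example with $d_0=i$ and all $f_j=0$, and for each edge $\{a,b\}$ of $H$ one positive example with $d_0=i$, $f_{n+a}=f_{n+b}=1$ and all other $f_j=0$; for even $i$ with $r=i/2$, $B_i$ contains one positive example with $d_0=i$ and all $f_j=0$, and for each edge $\{a,b\}$ of $G_r$ one negative example with $d_0=i$, $f_a=f_b=1$ and all other $f_j=0$. Let $d=\log_2 N+k+1$. Then $E$ admits a decision tree of depth at most $d$ that classifies it if and only if every $G_j$, $j\in[N]$, has a vertex cover of size at most $k$.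
   Context: A classification instance is a finite set of examples (functions from a common feature set to $\mathbb{Z}$), each labeled positive or negative. A decision tree (DT) is a rooted tree whose test nodes $v$ carry a feature $f(v)$ and integer threshold $\lambda(v)$ (examples with $e(f(v))\le\lambda(v)$ go to the left child, others to the right child) and whose leaves are labeled positive or negative; $T$ classifies $E$ if every example reaches a leaf with its own label. Depth = maximum number of test nodes on a root-to-leaf path. *)

(* Defs.v *)
From Stdlib Require List.
From mathcomp Require Import all_boot all_order all_algebra.
Set Implicit Arguments. Unset Strict Implicit. Unset Printing Implicit Defensive.
Import Order.TTheory GRing.Theory Num.Theory.
Local Open Scope ring_scope.

(* An example is a function F -> int; a labeled example is (example, label)
   with label true = positive, false = negative. *)
Inductive dtree (F : Type) : Type :=
| DLeaf (b : bool)
| DNode (f : F) (lambda : int) (l r : dtree F).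
Arguments DLeaf {F} b.

Fixpoint dt_eval (F : Type) (T : dtree F) (e : F -> int) : bool :=
  match T with
  | DLeaf b => b
  | DNode f lam l r => if e f <= lam then dt_eval l e else dt_eval r e
  end.

Fixpoint dt_depth (F : Type) (T : dtree F) : nat :=
  match T with
  | DLeaf _ => 0%N
  | DNode _ _ l r => (maxn (dt_depth l) (dt_depth r)).+1
  end.

Definition dt_classifies (F : Type) (T : dtree F) (E : seq ((F -> int) * bool)) :=
  forall p, List.In p E -> dt_eval T p.1 = p.2.

(* ---------- Graphs on [n] (vertices 'I_n, i.e. 0..n-1) ---------- *)
Definition simple_graph (n : nat) (G : rel 'I_n) :=
  symmetric G /\ irreflexive G.

Definition is_vertex_cover (n : nat) (G : rel 'I_n) (C : {set 'I_n}) :=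
  forall a b, G a b -> (a \in C) || (b \in C).

(* H: {0..k-1} clique, {k..n-1} independent, complete between the two parts *)
Definition Hgraph (n k : nat) : rel 'I_n :=
  fun a b => (a != b) && ((a < k)%N || (b < k)%N).

Definition edges (n : nat) (G : rel 'I_n) : seq ('I_n * 'I_n) :=
  flatten [seq [seq (a, b) | b <- filter (fun b : 'I_n => (a < b)%N && G a b) (enum 'I_n)] | a : 'I_n <- enum 'I_n].

(* ---------- Features f_1..f_{2n}, d_0 ----------
   FA a  stands for f_a      (a in [n]),
   FB a  stands for f_{n+a}  (a in [n]),
   D0    stands for d_0. *)
Inductive feat (n : nat) : Type :=
| FA (a : 'I_n) | FB (a : 'I_n) | D0.
Arguments D0 {n}.

Definition zero_ex (n : nat) (i : nat) : feat n -> int :=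
  fun x => match x with D0 => (i%:Z)%R | _ => 0 end.

Definition g_ex (n : nat) (i : nat) (a b : 'I_n) : feat n -> int :=
  fun x => match x with
           | D0 => (i%:Z)%R
           | FA c => if (c == a) || (c == b) then 1 else 0
           | FB _ => 0
           end.

Definition h_ex (n : nat) (i : nat) (a b : 'I_n) : feat n -> int :=
  fun x => match x with
           | D0 => (i%:Z)%R
           | FA _ => 0
           | FB c => if (c == a) || (c == b) then 1 else 0
           end.

(* block B_i, i in 1..2N; G r is the graph G_r (r in 1..N) *)
Definition block (n k : nat) (G : nat -> rel 'I_n) (i : nat)
  : seq ((feat n -> int) * bool) :=
  if odd i then
    (@zero_ex n i, false) :: [seq (@h_ex n i e.1 e.2, true) | e <- edges (@Hgraph n k)]
  else
    (@zero_ex n i, true) :: [seq (@g_ex n i e.1 e.2, false) | e <- edges (G i./2)].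

Definition instanceE (n k N : nat) (G : nat -> rel 'I_n)
  : seq ((feat n -> int) * bool) :=
  flatten [seq @block n k G i | i <- iota 1 (2 * N)].

(* Main.v *)
Require Import Defs.
From mathcomp Require Import all_boot all_order all_algebra zify.
Import Order.TTheory GRing.Theory Num.Theory.
Set Implicit Arguments. Unset Strict Implicit. Unset Printing Implicit Defensive.

Lemma split_int (lam : int) lo s : exists2 s1, (s1 <= s)%N &
  forall i, (lo <= i < lo + s)%N -> ((Posz i <= lam)%R = (i < lo + s1)%N).
Proof.
elim: s => [|s [s1 Hs1 IH]]; first by exists 0%N => // i; lia.
case H: (Posz (lo + s) <= lam)%R.
  exists s.+1 => // i Hi.
  have -> : (i < lo + s.+1)%N by lia.
  apply: (@Order.le_trans _ _ (Posz (lo+s))) => //. change (Posz i <= Posz (lo+s))%R; rewrite lez_nat; lia.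
exists s1; first lia.
move=> i Hi. case: (ltnP i (lo + s)) => Hi2.
  apply: IH; lia.
have -> : i = (lo + s)%N by lia.
rewrite H. apply/esym/negbTE. lia.
Qed.

Definition Cl (ev : nat -> bool) (u : nat -> nat) (d : nat) :=
  forall k i0 lo s,
    (forall i, (lo <= i < lo + s)%N -> ev i = ~~ odd i) ->
    (forall i, (lo <= i < lo + s)%N -> odd i -> (k <= u i)%N) ->
    ((lo <= i0 < lo + s)%N -> (k < u i0)%N) ->
    [/\ s = 1%N, ~~ odd lo & lo != i0] \/
    (2 ^ k * (s + (lo <= i0 < lo + s)) <= 2 ^ d)%N.

Lemma Cl_leaf b : Cl (fun _ => b) (fun _ => 0%N) 0.
Proof.
move=> k i0 lo s Hev Hodd Hsp.
case: s Hev Hodd Hsp => [|[|s]] Hev Hodd Hsp.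
- right. rewrite addn0. have -> : (lo <= i0 < lo)%N = false by lia. by rewrite muln0.
- case Hb: (lo <= i0 < lo + 1)%N.
    by have := Hsp Hb.
  case Ho: (odd lo).
    have := Hodd lo ltac:(lia) Ho. rewrite leqn0 => /eqP ->. by right.
  left; split => //. apply/eqP => E; subst. move: Hb. lia.
- have h1 := Hev lo ltac:(lia). have h2 := Hev lo.+1 ltac:(lia).
  rewrite h1 /= in h2. by case: (odd lo) h2.
Qed.

Lemma Cl_step ev u d ev' u' d' : Cl ev u d ->
  (forall i, ev' i = ev i) -> (forall i, u' i = (u i).+1) -> (d < d')%N ->
  Cl ev' u' d'.
Proof.
move=> H Hev Hu Hd k i0 lo s Hev' Hodd Hsp.
have Hdd : (2 * 2 ^ d <= 2 ^ d')%N by rewrite -expnS leq_exp2l.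
case: k Hodd Hsp => [|k] Hodd Hsp.
- have := H 0%N (lo + s)%N lo s.
  case.
  + by move=> i Hi; rewrite -Hev Hev'.
  + by [].
  + lia.
  + move=> [Hs Ho Hne]. rewrite Hs in Hev' *.
    case E: (lo == i0).
      right. move/eqP: E => <-. rewrite expn0 mul1n.
      have -> : (lo <= lo < lo + 1)%N by lia.
      have : (1 <= 2 ^ d)%N by rewrite expn_gt0.
      lia.
    by left.
  + rewrite expn0 !mul1n. have -> : (lo <= lo + s < lo + s)%N = false by lia.
    rewrite addn0 => Hs. right.
    case E: (lo <= i0 < lo + s)%N => /=; last by lia.
    have : (0 < s)%N by lia.
    lia.
- have := H k i0 lo s.
  case.
  + by move=> i Hi; rewrite -Hev Hev'.
  + move=> i Hi Hoi; have := Hodd i Hi Hoi; rewrite Hu; lia.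
  + move=> Hi; have := Hsp Hi; rewrite Hu; lia.
  + by left.
  + move=> Hb. right. rewrite expnS -mulnA. 
    apply: leq_trans Hdd. by rewrite leq_mul2l.
Qed.

Lemma Cl_split evl ul dl evr ur dr ev u (lam : int) :
  Cl evl ul dl -> Cl evr ur dr ->
  (forall i, ev i = if (Posz i <= lam)%R then evl i else evr i) ->
  (forall i, u i = if (Posz i <= lam)%R then ul i else ur i) ->
  Cl ev u (maxn dl dr).+1.
Proof.
move=> Hl Hr Hev Hu k i0 lo s Hev' Hodd Hsp.
have [s1 Hs1 Hsp1] := split_int lam lo s.
have HL := Hl k i0 lo s1.
have HR := Hr k i0 (lo + s1) (s - s1).
have L1 : forall i, (lo <= i < lo + s1)%N -> (Posz i <= lam)%R.
  move=> i Hi; rewrite Hsp1; lia.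
have L2 : forall i, (lo + s1 <= i < lo + s1 + (s - s1))%N -> (Posz i <= lam)%R = false.
  move=> i Hi; rewrite Hsp1; lia.
case: HL.
- by move=> i Hi; have := Hev' i ltac:(lia); rewrite Hev L1.
- by move=> i Hi Ho; have := Hodd i ltac:(lia) Ho; rewrite Hu L1.
- by move=> Hi; have := Hsp ltac:(lia); rewrite Hu L1.
- move=> [A1 A2 A3]; case: HR.
  + by move=> i Hi; have := Hev' i ltac:(lia); rewrite Hev L2.
  + by move=> i Hi Ho; have := Hodd i ltac:(lia) Ho; rewrite Hu L2.
  + by move=> Hi; have := Hsp ltac:(lia); rewrite Hu L2.
  + move=> [B1 B2 B3]. exfalso. rewrite A1 addn1 /= in B2. by rewrite A2 in B2.
  + move=> HB. case E: (s - s1)%N => [|t].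
      left. split => //; lia.
    right.
    have : (2 ^ dr <= 2 ^ maxn dl dr)%N by rewrite leq_exp2l // leq_maxr.
    have : (1 <= 2 ^ k)%N by rewrite expn_gt0.
    rewrite expnS. rewrite E in HB.
    move: HB. set K := (2 ^ k)%N. set M := (2 ^ maxn dl dr)%N. set D := (2 ^ dr)%N.
    have X : nat_of_bool (lo <= i0 < lo + s) = nat_of_bool (lo + s1 <= i0 < lo + s1 + t.+1) by lia.
    rewrite X. nia.
- move=> HA. case: HR.
  + by move=> i Hi; have := Hev' i ltac:(lia); rewrite Hev L2.
  + by move=> i Hi Ho; have := Hodd i ltac:(lia) Ho; rewrite Hu L2.
  + by move=> Hi; have := Hsp ltac:(lia); rewrite Hu L2.
  + move=> [B1 B2 B3]. case E: s1 => [|t].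
      left. rewrite E addn0 in B2 B3. split => //. lia.
    right.
    have : (2 ^ dl <= 2 ^ maxn dl dr)%N by rewrite leq_exp2l // leq_maxl.
    have : (1 <= 2 ^ k)%N by rewrite expn_gt0.
    rewrite expnS. rewrite E in HA.
    move: HA. set K := (2 ^ k)%N. set M := (2 ^ maxn dl dr)%N. set D := (2 ^ dl)%N.
    have X : nat_of_bool (lo <= i0 < lo + s) = nat_of_bool (lo <= i0 < lo + t.+1) by lia.
    rewrite X. nia.
  + move=> HB. right.
    have : (2 ^ dl <= 2 ^ maxn dl dr)%N by rewrite leq_exp2l // leq_maxl.
    have : (2 ^ dr <= 2 ^ maxn dl dr)%N by rewrite leq_exp2l // leq_maxr.
    rewrite expnS. move: HA HB.
    set K := (2 ^ k)%N. set M := (2 ^ maxn dl dr)%N. set D1 := (2 ^ dl)%N. set D2 := (2 ^ dr)%N.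
    have X : nat_of_bool (lo <= i0 < lo + s) = (nat_of_bool (lo <= i0 < lo + s1) + nat_of_bool (lo + s1 <= i0 < lo + s1 + (s - s1)))%N by lia.
    rewrite X. nia.
Qed.

Fixpoint ud n (T : dtree (feat n)) (e : feat n -> int) : nat :=
  match T with
  | DLeaf _ => 0%N
  | DNode f lam l r => ((match f with D0 => 0 | _ => 1 end) +
       (if (e f <= lam)%R then ud l e else ud r e))%N
  end.

Fixpoint fal n (T : dtree (feat n)) (e : feat n -> int) : seq 'I_n :=
  match T with
  | DLeaf _ => [::]
  | DNode f lam l r => (match f with FA c => [:: c] | _ => [::] end) ++
       (if (e f <= lam)%R then fal l e else fal r e)
  end.

Fixpoint fbl n (T : dtree (feat n)) (e : feat n -> int) : seq 'I_n :=
  match T with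
  | DLeaf _ => [::]
  | DNode f lam l r => (match f with FB c => [:: c] | _ => [::] end) ++
       (if (e f <= lam)%R then fbl l e else fbl r e)
  end.

Lemma ud_depth n (T : dtree (feat n)) e : (ud T e <= dt_depth T)%N.
Proof.
elim: T => //= f lam l IHl r IHr.
have h1 := leq_maxl (dt_depth l) (dt_depth r).
have h2 := leq_maxr (dt_depth l) (dt_depth r).
case: (_ <= _)%R; case: f => *; lia.
Qed.

Lemma fal_ud n (T : dtree (feat n)) e : (size (fal T e) <= ud T e)%N.
Proof. elim: T => //= f lam l IHl r IHr; case: (_ <= _)%R; case: f => * /=; lia. Qed.

Lemma fbl_ud n (T : dtree (feat n)) e : (size (fbl T e) <= ud T e)%N.
Proof. elim: T => //= f lam l IHl r IHr; case: (_ <= _)%R; case: f => * /=; lia. Qed.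

Lemma Cl_tree n (T : dtree (feat n)) :
  Cl (fun i => dt_eval T (@zero_ex n i)) (fun i => ud T (@zero_ex n i)) (dt_depth T).
Proof.
elim: T => [b|f lam l IHl r IHr]; first exact: Cl_leaf.
have h1 := leq_maxl (dt_depth l) (dt_depth r).
have h2 := leq_maxr (dt_depth l) (dt_depth r).
case: f => [c|c|] /=.
- case: (0 <= lam)%R.
  + apply: (Cl_step IHl) => // i. 
  + apply: (Cl_step IHr) => // i.
- case: (0 <= lam)%R.
  + apply: (Cl_step IHl) => // i.
  + apply: (Cl_step IHr) => // i.
- exact: (Cl_split (lam := lam) IHl IHr).
Qed.

Lemma sep n (T : dtree (feat n)) e1 e2 : dt_eval T e1 <> dt_eval T e2 ->
  exists f, e1 f <> e2 f /\
    match f with FA c => c \in fal T e1 | FB c => c \in fbl T e1 | D0 => True end.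
Proof.
elim: T => [b|f lam l IHl r IHr] //= Hne.
case E1: (e1 f <= lam)%R; case E2: (e2 f <= lam)%R; rewrite E1 E2 in Hne.
- have [g [Hg1 Hg2]] := IHl Hne. exists g; split => //.
  case: g Hg1 Hg2 => //= c _ H; by rewrite mem_cat H orbT.
- exists f; split; first by move=> E; rewrite E E2 in E1.
  case: f {E1 E2 Hne} => //= c; by rewrite in_cons eqxx.
- exists f; split; first by move=> E; rewrite E E2 in E1.
  case: f {E1 E2 Hne} => //= c; by rewrite in_cons eqxx.
- have [g [Hg1 Hg2]] := IHr Hne. exists g; split => //.
  case: g Hg1 Hg2 => //= c _ H; by rewrite mem_cat H orbT.
Qed.

Lemma In_mem (T : eqType) (x : T) (s : seq T) : List.In x s <-> x \in s.
Proof.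
elim: s => [|y s IH] //=. rewrite in_cons. split.
- by case=> [->|/IH H]; [rewrite eqxx | rewrite H orbT].
- by case/orP => [/eqP ->|/IH H]; [left|right].
Qed.

Lemma In_flatten A (x : A) (ss : seq (seq A)) :
  List.In x (flatten ss) <-> exists s, List.In s ss /\ List.In x s.
Proof.
elim: ss => [|s ss IH] /=; first by split => // [[s []]].
rewrite List.in_app_iff IH. split.
- case=> [H|[t [H1 H2]]]; [by exists s; split; [left|]|by exists t; split; [right|]].
- by case=> t [[<-|H1] H2]; [left|right; exists t].
Qed.

Lemma In_map A B (f : A -> B) (y : B) (s : seq A) :
  List.In y (map f s) <-> exists x, f x = y /\ List.In x s.
Proof. exact: List.in_map_iff. Qed.

Lemma edges_mem n (G : rel 'I_n) a b : ((a, b) \in edges G) = (a < b)%N && G a b.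
Proof.
apply/idP/idP.
- case/flattenP => s /mapP [a' _ ->] /mapP [b' Hb' [-> ->]].
  by rewrite mem_filter in Hb'; case/andP: Hb'.
- move=> H. apply/flattenP. exists [seq (a, b0) | b0 <- filter (fun b0 : 'I_n => (a < b0)%N && G a b0) (enum 'I_n)].
  + apply/mapP. by exists a; rewrite ?mem_enum.
  + apply/mapP. exists b => //. by rewrite mem_filter H mem_enum.
Qed.

Lemma E_zero n k N (G : nat -> rel 'I_n) i : (1 <= i <= 2 * N)%N ->
  List.In (@zero_ex n i, ~~ odd i) (@instanceE n k N G).
Proof.
move=> Hi. apply/In_flatten. exists (block k G i). split.
- apply/In_map. exists i. split => //. apply/In_mem. rewrite mem_iota. lia.
- rewrite /block. by case: (odd i); left.
Qed.

Lemma E_g n k N (G : nat -> rel 'I_n) i (a b : 'I_n) : (1 <= i <= 2 * N)%N -> ~~ odd i -> (a < b)%N -> G i./2 a b ->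
  List.In (@g_ex n i a b, false) (@instanceE n k N G).
Proof.
move=> Hi Ho Hab HG. apply/In_flatten. exists (block k G i). split.
- apply/In_map. exists i. split => //. apply/In_mem. rewrite mem_iota. lia.
- rewrite /block (negbTE Ho). right. apply/In_map. exists (a, b). split => //.
  apply/In_mem. by rewrite edges_mem Hab.
Qed.

Lemma E_h n k N (G : nat -> rel 'I_n) i (a b : 'I_n) : (1 <= i <= 2 * N)%N -> odd i -> (a < b)%N -> Hgraph k a b ->
  List.In (@h_ex n i a b, true) (@instanceE n k N G).
Proof.
move=> Hi Ho Hab HG. apply/In_flatten. exists (block k G i). split.
- apply/In_map. exists i. split => //. apply/In_mem. rewrite mem_iota. lia.
- rewrite /block Ho. right. apply/In_map. exists (a, b). split => //.
  apply/In_mem. by rewrite edges_mem Hab.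
Qed.

Lemma H_cover_card n k (C : {set 'I_n}) : (k < n)%N ->
  (forall a b : 'I_n, Hgraph k a b -> (a \in C) || (b \in C)) -> (k <= #|C|)%N.
Proof.
move=> Hkn Hc.
pose K := [set widen_ord Hkn x | x : 'I_k.+1].
have cK : #|K| = k.+1.
  rewrite card_imset ?card_ord // => x y /(congr1 val) /= h; exact: val_inj.
have inK : forall x, x \in K -> (x <= k)%N.
  move=> x /imsetP [y _ ->] /=. by rewrite -ltnS.
have D1 : (#|K :\: C| <= 1)%N.
  have G : ~~ (1 < #|K :\: C|)%N; last by lia.
  apply/negP => /card_gt1P [x [y [hx' hy' hne']]].
  move: hx' hy'; rewrite !inE => /andP [hx kx] /andP [hy ky].
  move/negbTE: hne' => hne.
  have := Hc x y. rewrite /Hgraph hne /= (negbTE hx) (negbTE hy).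
  have := inK x kx; have := inK y ky.
  move=> a b H; have : (x < k)%N || (y < k)%N.
    case: (ltnP x k) => //= h1. apply: contraT => h2.
    have : (x : nat) = y by lia. by move/val_inj => E; rewrite E eqxx in hne.
  by move=> /H.
have := cardsID C K. rewrite cK => E.
have : (#|K :&: C| <= #|C|)%N by apply: subset_leq_card; apply: subsetIr.
move: E D1. set a := #|K :&: C|. set b := #|K :\: C|. lia.
Qed.

Lemma forward n k q (G : nat -> rel 'I_n) :
  (1 <= k)%N -> (k < n)%N ->
  (forall r, (1 <= r <= 2 ^ q)%N -> simple_graph (G r)) ->
  (exists T : dtree (feat n),
      (dt_depth T <= q + k + 1)%N /\ dt_classifies T (@instanceE n k (2 ^ q) G)) ->
  (forall r, (1 <= r <= 2 ^ q)%N ->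
     exists C : {set 'I_n}, (#|C| <= k)%N /\ is_vertex_cover (G r) C).
Proof.
move=> hk hkn hsimp [T [hd hcl]] r hr.
have hi : (1 <= 2 * r <= 2 * 2 ^ q)%N by lia.
have hodd : odd (2 * r) = false by rewrite mul2n odd_double.
have hhalf : (2 * r)./2 = r by rewrite mul2n doubleK.
have hlab : forall j, (1 <= j < 1 + 2 * 2 ^ q)%N -> dt_eval T (@zero_ex n j) = ~~ odd j.
  move=> j hj. exact: (hcl _ (@E_zero n k (2 ^ q) G j ltac:(lia))).
pose C := [set c | c \in fal T (@zero_ex n (2 * r))].
have cov : is_vertex_cover (G r) C.
  have [hsym hirr] := hsimp r hr.
  have main : forall a b : 'I_n, (a < b)%N -> G r a b -> (a \in C) || (b \in C).
    move=> a b hab hG.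
    have h1 := hlab (2 * r)%N ltac:(lia). rewrite hodd /= in h1.
    have h2 := hcl _ (@E_g n k (2 ^ q) G (2 * r)%N a b hi ltac:(by rewrite hodd) hab ltac:(by rewrite hhalf)).
    simpl in h2.
    have [f [hf1 hf2]] := @sep n T (@zero_ex n (2 * r)) (@g_ex n (2 * r) a b) ltac:(by rewrite h1 h2).
    case: f hf1 hf2 => [c|c|] //= hf1 hf2.
    case E: ((c == a) || (c == b)); rewrite E in hf1 => //.
    case/orP: E => /eqP E; subst c; by rewrite !inE hf2 ?orbT.
  move=> a b hG. case: (ltngtP a b) => h.
  - exact: main.
  - rewrite orbC. apply: main h _. by rewrite hsym.
  - have E : a = b by apply: val_inj. by subst; rewrite hirr in hG.
case: (leqP #|C| k) => hC; first by exists C.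
exfalso.
have hu : (k < ud T (@zero_ex n (2 * r)))%N.
  apply: (leq_trans hC). apply: (leq_trans _ (fal_ud _ _)).
  rewrite cardsE. exact: card_size.
have := @Cl_tree n T k (2 * r)%N 1 (2 * 2 ^ q)%N.
case.
- move=> j hj. exact: hlab.
- move=> j hj hoj.
  pose C' := [set c | c \in fbl T (@zero_ex n j)].
  have : (k <= #|C'|)%N.
    apply: H_cover_card => //.
    have main : forall a b : 'I_n, (a < b)%N -> Hgraph k a b -> (a \in C') || (b \in C').
      move=> a b hab hG.
      have h1 := hlab j hj. rewrite hoj /= in h1.
      have h2 := hcl _ (@E_h n k (2 ^ q) G j a b ltac:(lia) hoj hab hG). simpl in h2.
      have [f [hf1 hf2]] := @sep n T (@zero_ex n j) (@h_ex n j a b) ltac:(by rewrite h1 h2).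
      case: f hf1 hf2 => [c|c|] //= hf1 hf2.
      case E: ((c == a) || (c == b)); rewrite E in hf1 => //.
      case/orP: E => /eqP E; subst c; by rewrite !inE hf2 ?orbT.
    move=> a b hG. case: (ltngtP a b) => h.
    + exact: main.
    + rewrite orbC. apply: main h _. by rewrite /Hgraph eq_sym orbC.
    + have E : a = b by apply: val_inj. by subst; rewrite /Hgraph eqxx in hG.
  move=> h. apply: (leq_trans h). apply: (leq_trans _ (fbl_ud _ _)).
  rewrite cardsE. exact: card_size.
- move=> _. exact: hu.
- case=> hs. have : (1 <= 2 ^ q)%N by rewrite expn_gt0. lia.
- have -> : (1 <= 2 * r < 1 + 2 * 2 ^ q)%N by lia.
  move=> h. have := ud_depth T (@zero_ex n (2 * r)).
  have : (2 ^ dt_depth T <= 2 ^ (q + k + 1))%N by rewrite leq_exp2l.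
  rewrite !expnD expn1. move: h. set K := (2 ^ k)%N. set Q := (2 ^ q)%N.
  have : (1 <= K)%N by rewrite expn_gt0.
  nia.
Qed.

Definition chain n (mk : 'I_n -> feat n) (cs : seq 'I_n) (b : bool) : dtree (feat n) :=
  foldr (fun c t => DNode (mk c) 0%R t (DLeaf (~~ b))) (DLeaf b) cs.

Lemma chain_depth n mk cs b : dt_depth (@chain n mk cs b) = size cs.
Proof. elim: cs => //= c cs ->. by rewrite maxn0. Qed.

Lemma chain_eval n mk cs b (e : feat n -> int) : (forall c, (0 <= e (mk c))%R) ->
  dt_eval (@chain n mk cs b) e = if has (fun c => (0 < e (mk c))%R) cs then ~~ b else b.
Proof.
move=> h0. elim: cs => //= c cs ->.
have := h0 c. rewrite Order.POrderTheory.le_eqVlt.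
case: (ltgtP (e (mk c)) 0%R) => //= h _.
Qed.

Definition coverset n k (G : rel 'I_n) : {set 'I_n} :=
  odflt set0 [pick C : {set 'I_n} | (#|C| <= k)%N && [forall a, [forall b, G a b ==> (a \in C) || (b \in C)]]].

Definition hs n k : seq 'I_n := filter (fun c : 'I_n => (c < k)%N) (enum 'I_n).

Definition blk n k (G : nat -> rel 'I_n) (i : nat) : dtree (feat n) :=
  if odd i then chain (@FB n) (hs n k) false
  else chain (@FA n) (enum (coverset k (G i./2))) true.

Fixpoint build n k (G : nat -> rel 'I_n) (lo p : nat) : dtree (feat n) :=
  match p with
  | 0 => blk k G lo
  | p'.+1 => DNode D0 (Posz (lo + 2 ^ p' - 1)) (build k G lo p') (build k G (lo + 2 ^ p') p')
  end.

Lemma hs_size n k : (size (hs n k) <= k)%N.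
Proof.
have u : uniq (map val (hs n k)).
  rewrite map_inj_uniq; first by rewrite filter_uniq ?enum_uniq.
  exact: val_inj.
have := uniq_leq_size u (s2 := iota 0 k).
rewrite size_map size_iota. apply => x /mapP [c]. rewrite mem_filter => /andP [h _] ->.
by rewrite mem_iota.
Qed.

Lemma coverset_card n k (G : rel 'I_n) : (#|coverset k G| <= k)%N.
Proof.
rewrite /coverset. case: pickP => [C /andP [h _]|_] //=. by rewrite cards0.
Qed.

Lemma blk_depth n k G i : (dt_depth (@blk n k G i) <= k)%N.
Proof.
rewrite /blk; case: (odd i); rewrite chain_depth ?hs_size //.
rewrite -cardE. exact: coverset_card.
Qed.

Lemma build_depth n k G p lo : (dt_depth (@build n k G lo p) <= p + k)%N.
Proof.
elim: p lo => [|p IH] lo /=; first exact: blk_depth.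
have := IH lo; have := IH (lo + 2 ^ p)%N. 
lia.
Qed.

Lemma build_eval n k G p lo i (e : feat n -> int) : e D0 = Posz i ->
  (lo <= i < lo + 2 ^ p)%N -> dt_eval (@build n k G lo p) e = dt_eval (blk k G i) e.
Proof.
move=> hD. elim: p lo => [|p IH] lo hi /=.
  have -> : i = lo by rewrite expn0 in hi; lia. done.
rewrite hD.
have hp : (1 <= 2 ^ p)%N by rewrite expn_gt0.
case: (ltnP i (lo + 2 ^ p)) => h.
  have -> : (Posz i <= Posz (lo + 2 ^ p - 1))%R. rewrite lez_nat. lia.
  apply: IH. lia.
have -> : (Posz i <= Posz (lo + 2 ^ p - 1))%R = false. rewrite lez_nat. lia.
apply: IH. rewrite expnS in hi. lia.
Qed.

Lemma backward n k q (G : nat -> rel 'I_n) :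
  (forall r, (1 <= r <= 2 ^ q)%N ->
     exists C : {set 'I_n}, (#|C| <= k)%N /\ is_vertex_cover (G r) C) ->
  (exists T : dtree (feat n),
      (dt_depth T <= q + k + 1)%N /\ dt_classifies T (@instanceE n k (2 ^ q) G)).
Proof.
move=> hcov. exists (build k G 1 (q + 1)). split.
  have := build_depth k G (q + 1) 1. lia.
move=> [e lbl] /In_flatten [s [/In_map [i [<- /In_mem hi]] hp]]. rewrite mem_iota in hi.
have hi' : (1 <= i < 1 + 2 ^ (q + 1))%N by rewrite expnD expn1; lia.
rewrite /block in hp. case ho: (odd i) in hp.
- case: hp => [[<- <-]|/In_map [[a b] [[<- <-] /In_mem]]].
  + rewrite /= (@build_eval n k G (q + 1) 1 i) // /blk ho chain_eval //.
    have -> // : has (fun c => (0 < @zero_ex n i (FB c))%R) (hs n k) = false.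
    by apply/negbTE/hasPn => c _ /=; done.
  + rewrite edges_mem => /andP [hab hH].
    rewrite /= (@build_eval n k G (q + 1) 1 i) // /blk ho chain_eval; last first.
      move=> c /=; by case: (_ || _).
    have -> // : has (fun c => (0 < @h_ex n i a b (FB c))%R) (hs n k) = true.
    apply/hasP. exists a; last by rewrite /= eqxx.
    rewrite mem_filter mem_enum andbT. move: hH; rewrite /Hgraph => /andP [_]. lia.
- have hr : (1 <= i./2 <= 2 ^ q)%N.
    have := odd_double_half i. rewrite ho /= add0n => E.
    move: hi; rewrite -E -mul2n. lia.
  have hC : forall a b, G i./2 a b -> (a \in coverset k (G i./2)) || (b \in coverset k (G i./2)).
    rewrite /coverset. case: pickP => [C /andP [_ /forallP hC]|none] a b hab.
      by have := hC a => /forallP /(_ b) /implyP /(_ hab).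
    exfalso. have [C [c1 c2]] := hcov _ hr. have := none C. rewrite c1 /=.
    move/negP; apply. apply/forallP => x; apply/forallP => y; apply/implyP => hxy.
    exact: c2.
  case: hp => [[<- <-]|/In_map [[a b] [[<- <-] /In_mem]]].
  + rewrite /= (@build_eval n k G (q + 1) 1 i) // /blk ho chain_eval //.
    have -> // : has (fun c => (0 < @zero_ex n i (FA c))%R) (enum (coverset k (G i./2))) = false.
    by apply/negbTE/hasPn => c _ /=; done.
  + rewrite edges_mem => /andP [hab hG].
    rewrite /= (@build_eval n k G (q + 1) 1 i) // /blk ho chain_eval; last first.
      move=> c /=; by case: (_ || _).
    have -> // : has (fun c => (0 < @g_ex n i a b (FA c))%R) (enum (coverset k (G i./2))) = true.
    have := hC a b hG. case/orP => h.
      apply/hasP. exists a; last by rewrite /= eqxx. by rewrite mem_enum.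
    apply/hasP. exists b; last by rewrite /= eqxx orbT. by rewrite mem_enum.
Qed.

Unset Implicit Arguments.

Theorem lemma11 (n k q : nat) (G : nat -> rel 'I_n) :
  (1 <= k)%N -> (k < n)%N ->
  (forall r, (1 <= r <= 2 ^ q)%N -> simple_graph (G r)) ->
  (exists T : dtree (feat n),
      (dt_depth T <= q + k + 1)%N /\ dt_classifies T (@instanceE n k (2 ^ q) G))
  <->
  (forall r, (1 <= r <= 2 ^ q)%N ->
     exists C : {set 'I_n}, (#|C| <= k)%N /\ is_vertex_cover (G r) C).
Proof.
move=> hk hkn hs. split.
- exact: forward.
- exact: backward.
Qed.
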